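(* Assume $D$ has at least one arc. The largest number of nodes $|W|$ over subsystem states $\psi^A_W$ belonging to $M_E$ equals the number of nodes of the largest transmission block of $D$; if $D$ has no transmission block, this maximum equals $2$.
   Context: $D=(V,A)$ is a directed graph on $V=\{1,\dots,N\}$ with rates $T_{ij}\ge0$, $T_{ij}>0$ iff $(j,i)\in A$, $T_{ii}=0$. A subsystem state is a pair $(W,A)$ with $W\subseteq V$ nonempty and $A:W\to\{S,I,R\}$, written $\psi^A_W$; $S_i$, $I_i$ denote the single-node states, and for $n\notin W$, $\psi^A_WI_n$ denotes the state on $W\cup\{n\}$ agreeing with $A$ on $W$ and with $n$ in state $I$. For $k\in W$, $h^X_k(\psi^A_W)$ is the state obtained by changing the state of $k$ to $X$. $\mathrm{IN}(X)$ is the set of nodes from which some member of $X$ is reachable by a directed path; for disjoint nonempty $X,Y,Z$, $f_E(X,Y,Z)=1$ iff $\mathrm{IN}(X)\cap\mathrm{IN}(Y)=\emptyset$ in $D-Z$, else $0$; by convention $f_E(\{n\},\emptyset,\{k\})=0$. Induced set: for a state $\psi^A_W$ with $A:W\to\{S,I\}$, the states it induces are (i) $\psi^A_W$ itself and $h^S_k(\psi^A_W)$ for each $k\in W$ with $A_k=I$ such that $T_{kn}>0$ for some $n\in W$ with $A_n=I$; (ii) for each $k\in W$ and $n\in V\setminus W$ with $T_{kn}>0$: if $f_E(\{n\},W\setminus\{k\},\{k\})=0$, the state $h^S_k(\psi^A_W)I_n$; if it equals $1$, the states $h^S_k(\psi^A_W)$, $S_kI_n$ and $S_k$. $M_E$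 is the smallest set of subsystem states containing $S_i$ and $I_i$ for all $i\in V$ and closed under taking induced states (these are exactly the states appearing in the exact closed moment equations for Markovian SIR dynamics obtained using the closure $\langle\psi^A_WI_n\rangle=\langle\psi^A_W\rangle\langle S_kI_n\rangle/\langle S_k\rangle$ wherever $f_E=1$). For $W\subseteq V$, $D[W]$ is the subgraph with node set $W$ and all arcs of $D$ with both endpoints in $W$. A graph is biconnected if it has at least three vertices, is connected, and stays connected after deleting any single vertex. $D[W]$ is a directed sub-block if some node of $W$ is reachable by a directed path within $D[W]$ from every other node of $W$, and the underlying undirected graph of $D[W]$ is biconnected. $D[W]$ is a transmission block if it is a directed sub-block and there is no $U\supsetneq W$ with $D[U]$ a directed sub-block. *)

(* Defs.v *)
From HB Require Import structures.
From mathcomp Require Import all_boot.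
Set Implicit Arguments. Unset Strict Implicit. Unset Printing Implicit Defensive.

Inductive sir := Sus | Inf | Rec.
Definition sir_code (x : sir) : nat := match x with Sus => 0 | Inf => 1 | Rec => 2 end.
Definition sir_decode (n : nat) : option sir :=
  match n with 0 => Some Sus | 1 => Some Inf | 2 => Some Rec | _ => None end.
Lemma sir_codeK : pcancel sir_code sir_decode. Proof. by case. Qed.
HB.instance Definition _ := Equality.copy sir (pcan_type sir_codeK).

Section Graph.
Variable N : nat.
(* The digraph D on V = 'I_N: [arc j i] means (j,i) is an arc of D,
   i.e. T_{ij} > 0 (node j can infect node i). *)
Variable arc : rel 'I_N.

(* A subsystem state psi^A_W: the value None means "not in W". *)
Definition state := {ffun 'I_N -> option sir}.

Definition supp (psi : state) : {set 'I_N} := [set x | psi x != None].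

Definition no_R (psi : state) : bool := [forall x, psi x != Some Rec].

Definition single (i : 'I_N) (s : sir) : state :=
  [ffun x => if x == i then Some s else None].

Definition SI (k n : 'I_N) : state :=
  [ffun x => if x == k then Some Sus else if x == n then Some Inf else None].

Definition hset (X : sir) (k : 'I_N) (psi : state) : state :=
  [ffun x => if x == k then Some X else psi x].

Definition addI (n : 'I_N) (psi : state) : state :=
  [ffun x => if x == n then Some Inf else psi x].

Definition arc_minus (Z : {set 'I_N}) : rel 'I_N :=
  [rel u v | [&& arc u v, u \notin Z & v \notin Z]].

Definition IN (Z X : {set 'I_N}) : {set 'I_N} :=
  [set u | (u \notin Z) && [exists x in X, connect (arc_minus Z) u x]].

Definition fE (X Y Z : {set 'I_N}) : bool := [disjoint IN Z X & IN Z Y].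

(* f_E({n}, W\{k}, {k}), with the convention f_E({n}, emptyset, {k}) = 0 *)
Definition fE_nWk (n : 'I_N) (W : {set 'I_N}) (k : 'I_N) : bool :=
  if W :\ k == set0 then false else fE [set n] (W :\ k) [set k].

Definition induced (psi psi' : state) : Prop :=
  no_R psi /\
  [\/ psi' = psi,
      (exists k n, [/\ psi k = Some Inf, psi n = Some Inf, arc n k &
                       psi' = hset Sus k psi])
    | (exists k n, [/\ k \in supp psi, n \notin supp psi, arc n k &
          (if fE_nWk n (supp psi) k
           then [\/ psi' = hset Sus k psi, psi' = SI k n | psi' = single k Sus]
           else psi' = addI n (hset Sus k psi))])].

Inductive ME : state -> Prop :=
  | ME_S (i : 'I_N) : ME (single i Sus)
  | ME_I (i : 'I_N) : ME (single i Inf)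
  | ME_step (psi psi' : state) : ME psi -> induced psi psi' -> ME psi'.

Definition sub_arc (W : {set 'I_N}) : rel 'I_N :=
  [rel u v | [&& arc u v, u \in W & v \in W]].

Definition und_arc (W : {set 'I_N}) : rel 'I_N :=
  [rel u v | sub_arc W u v || sub_arc W v u].

Definition und_connected (W : {set 'I_N}) : bool :=
  [forall u in W, forall v in W, connect (und_arc W) u v].

Definition biconnected (W : {set 'I_N}) : bool :=
  [&& 2 < #|W|, und_connected W & [forall x in W, und_connected (W :\ x)]].

Definition directed_subblock (W : {set 'I_N}) : bool :=
  [exists r in W, forall u in W, connect (sub_arc W) u r] && biconnected W.

Definition transmission_block (W : {set 'I_N}) : bool :=
  directed_subblock W &&
  [forall U : {set 'I_N}, (W \proper U) ==> ~~ directed_subblock U].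

End Graph.

(* Main.v *)
Require Import Defs.
From HB Require Import structures.
From mathcomp Require Import all_boot.
Set Implicit Arguments. Unset Strict Implicit. Unset Printing Implicit Defensive.

Section Proof.
Variable N : nat.
Variable arc : rel 'I_N.
Local Notation V := 'I_N.

Definition adj : rel V := fun u v => arc u v || arc v u.

Lemma adj_sym : symmetric adj.
Proof. by move=> u v; rewrite /adj orbC. Qed.

Lemma und_arcE S u v : und_arc arc S u v = [&& adj u v, u \in S & v \in S].
Proof. rewrite /und_arc /sub_arc /adj /=; by case: (arc u v); case: (arc v u); case: (u \in S); case: (v \in S). Qed.

Lemma und_sym S : connect_sym (und_arc arc S).
Proof. apply: sym_connect_sym => u v; rewrite !und_arcE adj_sym; by case: (u \in S); case: (v \in S); rewrite ?andbT ?andbF. Qed.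

Lemma und_mono (S S' : {set V}) u v : S \subset S' ->
  connect (und_arc arc S) u v -> connect (und_arc arc S') u v.
Proof.
move=> sS; apply: connect_sub => x y; rewrite !und_arcE => /and3P[a xS yS].
by apply: connect1; rewrite und_arcE a (subsetP sS _ xS) (subsetP sS _ yS).
Qed.

Lemma sub_mono (S S' : {set V}) u v : S \subset S' ->
  connect (sub_arc arc S) u v -> connect (sub_arc arc S') u v.
Proof.
move=> sS; apply: connect_sub => x y /= /and3P[a xS yS].
by apply: connect1; rewrite /sub_arc /= a (subsetP sS _ xS) (subsetP sS _ yS).
Qed.

Lemma path_und_conn (S : {set V}) y p : path adj y p -> {subset y :: p <= S} ->
  connect (und_arc arc S) y (last y p).
Proof.
elim: p y => [|z p IH] y /=; first by move=> _ _; apply: connect0.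
move=> /andP[ayz pz] sub; apply: (connect_trans (y := z)).
  apply: connect1; rewrite und_arcE ayz !sub // !inE eqxx ?orbT //.
apply: IH => // x xin; apply: sub; by rewrite inE xin orbT.
Qed.

Lemma path_sub_conn (S : {set V}) y p : path arc y p -> {subset y :: p <= S} ->
  connect (sub_arc arc S) y (last y p).
Proof.
elim: p y => [|z p IH] y /=; first by move=> _ _; apply: connect0.
move=> /andP[ayz pz] sub; apply: (connect_trans (y := z)).
  apply: connect1; rewrite /sub_arc /= ayz !sub // !inE eqxx ?orbT //.
apply: IH => // x xin; apply: sub; by rewrite inE xin orbT.
Qed.


Definition twoC (U : {set V}) := forall x, und_connected arc (U :\ x).

Lemma und_connectedP (S : {set V}) c : c \in S ->
  (forall y, y \in S -> connect (und_arc arc S) y c) -> und_connected arc S.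
Proof.
move=> cS H; apply/forallP => u; apply/implyP => uS; apply/forallP => v; apply/implyP => vS.
apply: (connect_trans (H u uS)); rewrite und_sym; exact: H.
Qed.

Lemma und_connectedE (S : {set V}) u v : und_connected arc S -> u \in S -> v \in S ->
  connect (und_arc arc S) u v.
Proof. by move=> /forallP/(_ u)/implyP H uS vS; move: (H uS) => /forallP/(_ v)/implyP; apply. Qed.

Lemma ear2C (U : {set V}) a b e :
  twoC U -> a \in U -> b \in U -> a != b -> uniq e -> all (fun y => y \notin U) e ->
  path adj a (rcons e b) -> twoC (U :|: [set y in e]).
Proof.
move=> H aU bU ab ue /allP eU pe x.
set S := (U :|: [set y in e]) :\ x.
have aE : a \notin e by apply/negP => /eU; rewrite aU.
have bE : b \notin e by apply/negP => /eU; rewrite bU.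
have inS z : (z \in U) || (z \in e) -> z != x -> z \in S.
  by move=> zz zx; rewrite !inE zx.
have subS : U :\ x \subset S.
  by apply/subsetP => z; rewrite !inE => /andP[-> ->].
have toU z : z \in U -> z != x -> forall c, c \in U -> c != x -> connect (und_arc arc S) z c.
  move=> zU zx c cU cx; apply: (und_mono subS); apply: und_connectedE (H x) _ _;
  by rewrite !inE ?zx ?cx ?zU ?cU.
set c := if x == a then b else a.
have cU : c \in U by rewrite /c; case: ifP => _.
have cx : c != x by rewrite /c; case: (eqVneq x a) => [->|]; rewrite 1?eq_sym.
apply: (und_connectedP (c := c)); first by apply: inS; rewrite ?cU.
move=> y; rewrite !inE => /andP[yx] /orP[yU|ye].
  exact: toU.
have [l1 [l2 ee]] : exists l1 l2, e = l1 ++ y :: l2 by case/splitPr: ye => l1 l2; exists l1, l2.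
move: ue pe; rewrite ee in aE bE inS *.
rewrite rcons_cat /= cat_path /= cat_uniq /= => /and4P[u1 /norP[yl1 hl12] yl2 u2] /and3P[p1 ay p2].
have nl z : z \in l1 -> z \in l2 -> False.
  by move=> z1 z2; move/hasP: hl12; apply; exists z.
case: (boolP (x \in a :: l1)) => xin.
- apply: (connect_trans (y := b)); last first.
    apply: toU => //; apply/eqP => bx; move: xin; rewrite -bx inE eq_sym (negbTE ab) /=.
    by move=> bl1; move: bE; rewrite mem_cat bl1.
  have := path_und_conn (S := S) p2; rewrite last_rcons; apply.
  move=> z; rewrite inE mem_rcons inE => /or3P[/eqP->|/eqP->|zl2].
  + apply: inS; first by rewrite !mem_cat !inE eqxx /= !orbT.
    exact: yx.
  + apply: inS; first by rewrite bU.
    apply/eqP => bx; move: xin; rewrite -bx inE eq_sym (negbTE ab) /=.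
    by move=> bl1; move: bE; rewrite mem_cat bl1.
  + apply: inS; first by rewrite !mem_cat !inE zl2 /= !orbT.
    apply/eqP => zx; move: xin; rewrite -zx inE => /orP[/eqP za|zl1].
      by move: aE; rewrite -za mem_cat inE zl2 !orbT.
    exact: (nl z).
- rewrite und_sym; apply: (connect_trans (y := a)).
    apply: (toU c cU cx a aU); apply/eqP => ax; move: xin; by rewrite ax mem_head.
  have : path adj a (rcons l1 y) by rewrite -cats1 cat_path p1 /= ay.
  move=> pl; have := path_und_conn (S := S) pl; rewrite last_rcons; apply.
  move=> z; rewrite inE mem_rcons inE => /or3P[/eqP->|/eqP->|zl1].
  + by apply: inS; rewrite ?aU //; apply/eqP => ax; move: xin; rewrite ax mem_head.
  + by apply: inS; rewrite // !mem_cat !inE eqxx /= !orbT.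
  + apply: inS; first by rewrite !mem_cat zl1 /= !orbT.
    by apply/eqP => zx; move: xin; rewrite -zx inE zl1 orbT.
Qed.


Lemma path_conn_last (e : rel V) x p y : path e x p -> y \in x :: p -> connect e y (last x p).
Proof.
move=> pp yin; case/splitPl: p / yin pp => p1 p2 ly; rewrite cat_path => /andP[_ p2'].
rewrite last_cat -ly; apply/connectP; by exists p2.
Qed.

Lemma path_to_sub (S : {set V}) x p : path arc x p -> {subset x :: p <= S} -> path (sub_arc arc S) x p.
Proof.
elim: p x => [|y p IH] x //= /andP[axy pp] sub.
rewrite /sub_arc /= axy !sub ?inE ?eqxx ?orbT //=.
apply: IH => // z zin; apply: sub; by rewrite inE zin orbT.
Qed.

Lemma last_split (e : rel V) (P : pred V) x s : has P (x :: s) -> path e x s ->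
  exists z l2, [/\ P z, all (predC P) l2, path e z l2, last z l2 = last x s &
                   exists l1, x :: s = l1 ++ z :: l2].
Proof.
elim: s x => [|y s IH] x.
  by rewrite /= orbF => Px _; exists x, [::]; split => //; exists [::].
move=> hP /= /andP[exy ps].
case: (boolP (has P (y :: s))) => h.
  have [z [l2 [Pz al2 pz lz [l1 e1]]]] := IH y h ps.
  exists z, l2; split => //; exists (x :: l1); by rewrite e1.
have Px : P x by move: hP (h); rewrite /=; case: (P x) => //= ->.
exists x, (y :: s); split => //=; last by exists [::].
  by move: h; rewrite /= negb_or all_predC.
by rewrite exy ps.
Qed.

Lemma first_split (P : pred V) s : has P s ->
  exists l1 y l2, [/\ s = l1 ++ y :: l2, P y & all (predC P) l1].
Proof.
elim: s => [|x s IH] //= /orP[Px|hs].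
  by exists [::], x, s.
case: (boolP (P x)) => Px; first by exists [::], x, s.
have [l1 [y [l2 [-> Py al1]]]] := IH hs.
by exists (x :: l1), y, l2; rewrite /= Px.
Qed.

Lemma am_notin (K : {set V}) x p : path (arc_minus arc K) x p -> all (fun y => y \notin K) p.
Proof.
elim: p x => [|y p IH] x //= /andP[/and3P[_ _ yK] pp]; by rewrite yK (IH y).
Qed.

Lemma am_arc (K : {set V}) : subrel (arc_minus arc K) arc.
Proof. by move=> x y /and3P[]. Qed.


Definition rooted (U : {set V}) := [exists r in U, forall u in U, connect (sub_arc arc U) u r].
Definition good (U : {set V}) := [/\ 1 < #|U|, twoC U & rooted U].

Lemma ear_good (U : {set V}) a b e :
  good U -> a \in U -> b \in U -> a != b -> uniq e -> all (fun y => y \notin U) e ->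
  path adj a (rcons e b) ->
  (forall y, y \in e -> exists2 t, t \in U & connect (sub_arc arc (U :|: [set y in e])) y t) ->
  good (U :|: [set y in e]).
Proof.
move=> [cU tU /exists_inP[r rU /forall_inP Hr]] aU bU ab ue ae pe He.
have sU : U \subset U :|: [set y in e] by apply: subsetUl.
split.
- by apply: leq_trans cU (subset_leq_card sU).
- exact: ear2C ue ae pe.
- apply/exists_inP; exists r; first by rewrite inE rU.
  apply/forall_inP => y; rewrite !inE => /orP[yU|ye].
    exact: sub_mono sU (Hr y yU).
  have [t tU1 ct] := He y ye.
  by apply: connect_trans ct (sub_mono sU (Hr t tU1)).
Qed.


Lemma arc_adj x y : arc x y -> adj x y.
Proof. by rewrite /adj => ->. Qed.

Lemma extend (U : {set V}) k n u w :
  good U -> k \in U -> w \in U -> w != k -> n \notin U -> arc n k -> u != k ->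
  connect (arc_minus arc [set k]) u n -> connect (arc_minus arc [set k]) u w ->
  exists U', [/\ good U', U \subset U' & n \in U'].
Proof.
move=> gU kU wU wk nU ank uk cun cuw.
set am := arc_minus arc [set k].
pose reachU y := [exists w0, [&& w0 \in U, w0 != k & connect am y w0]].
have rU y : y \in U -> y != k -> reachU y.
  by move=> yU yk; apply/existsP; exists y; rewrite yU yk connect0.
case/connectP: cun => p0 pp0 en.
case: (shortenP pp0) en => p pp up _ en.
have notk := am_notin pp.
have nk y : y \in u :: p -> y != k.
  rewrite inE => /orP[/eqP->//|yp]; by move/allP: notk => /(_ y yp); rewrite inE.
have hr : has reachU (u :: p).
  by rewrite /=; apply/orP; left; apply/existsP; exists w; rewrite wU wk cuw.
have [z [l2 [rz al2 pz lz [l1 e1]]]] := last_split hr pp.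
have uz2 : uniq (z :: l2) by move: up; rewrite e1 cat_uniq => /and3P[_ _ ->].
have zk : z != k by apply: nk; rewrite e1 mem_cat mem_head orbT.
have l2nU : all (fun y => y \notin U) l2.
  apply/allP => y yl2; apply/negP => yU.
  have yk : y != k by apply: nk; rewrite e1 mem_cat inE yl2 !orbT.
  by move/allP: al2 => /(_ y yl2) /=; rewrite rU.
have pz_arc : path arc z l2 := sub_path (@am_arc _) pz.
have en' : n = last z l2 by rewrite en -lz.
have pzk : path arc z (rcons l2 k) by rewrite rcons_path pz_arc -en' ank.
have pzk_adj : path adj z (rcons l2 k) := sub_path arc_adj pzk.
case: (boolP (z \in U)) => zU.
- exists (U :|: [set y in l2]); split; last first.
  + have : n \in z :: l2 by rewrite en' mem_last.
    rewrite inE => /orP[/eqP nz|nl2]; first by move: nU; rewrite nz zU.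
    by rewrite !inE nl2 orbT.
  + exact: subsetUl.
  apply: (ear_good gU zU kU zk) => //; first by move: uz2; rewrite cons_uniq => /andP[].
  move=> y yl2; exists k => //.
  have pS : path (sub_arc arc (U :|: [set y in l2])) z (rcons l2 k).
    apply: path_to_sub pzk _ => t; rewrite inE mem_rcons inE => /or3P[/eqP->|/eqP->|tl2];
    by rewrite !inE ?zU ?kU ?tl2 ?orbT.
  have := path_conn_last pS (y := y); rewrite last_rcons; apply.
  by rewrite inE mem_rcons inE yl2 !orbT.
case/existsP: rz => w' /and3P[w'U w'k czw'].
case/connectP: czw' => q0 pq0 ew'.
case: (shortenP pq0) ew' => q1 pq1 uq1 _ ew'.
have hq : has (fun y => y \in U) q1.
  have : w' \in z :: q1 by rewrite ew' mem_last.
  rewrite inE => /orP[/eqP wz|wq]; first by move: zU; rewrite -wz w'U.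
  by apply/hasP; exists w'.
have [q [s [rest [eq1 sU aq]]]] := first_split hq.
have pzq : path am z (rcons q s).
  by move: pq1; rewrite eq1 cat_path /= => /and3P[a1 a2 _]; rewrite -cats1 cat_path a1 /= a2.
have uzq : uniq (z :: rcons q s).
  by move: uq1; rewrite eq1 -cat_rcons -cat_cons cat_uniq => /andP[].
have sk : s != k.
  by move/allP: (am_notin pq1) => /(_ s); rewrite eq1 mem_cat mem_head orbT inE => ->.
have pzq_arc : path arc z (rcons q s) := sub_path (@am_arc _) pzq.
have qr y : y \in q -> reachU y.
  move=> yq; apply/existsP; exists s; rewrite sU sk /=.
  have := path_conn_last pzq (y := y); rewrite last_rcons; apply.
  by rewrite inE mem_rcons inE yq !orbT.
have ql2 y : y \in q -> y \notin l2.
  by move=> yq; apply/negP => yl2; move/allP: al2 => /(_ y yl2) /=; rewrite qr.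
have uq : uniq q by move: uzq; rewrite /= rcons_uniq => /and3P[_ _].
have zq : z \notin q by move: uzq; rewrite /= mem_rcons inE negb_or => /andP[/andP[_ ->]].
set e := rev q ++ z :: l2.
have ezl2 y : y \in z :: l2 -> y \in e by rewrite /e mem_cat => ->; rewrite orbT.
have eq' y : y \in q -> y \in e by rewrite /e mem_cat mem_rev => ->.
exists (U :|: [set y in e]); split; last first.
- by rewrite !inE ezl2 ?orbT // en' mem_last.
- exact: subsetUl.
apply: (ear_good gU sU kU sk).
- rewrite /e cat_uniq rev_uniq uq uz2 andbT andTb; apply/hasPn => y yin /=; rewrite mem_rev.
  move: yin; rewrite inE => /orP[/eqP->//|yl2]; apply/negP => yq; by move: (ql2 y yq); rewrite yl2.
- rewrite /e all_cat all_rev /= l2nU zU !andbT.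
  by apply/allP => y yq; move/allP: aq => /(_ y yq).
- rewrite /e rcons_cat /= cat_path.
  have h1 : path adj s (rcons (rev q) z).
    have := rev_path adj z (rcons q s); rewrite last_rcons belast_rcons rev_cons => ->.
    by apply: sub_path pzq_arc => a b ab; rewrite /adj ab orbT.
  move: h1; rewrite rcons_path => /andP[-> h2] /=; rewrite h2 /=.
  by move: pzk_adj => /=.
- move=> y ye; move: (ye); rewrite /e mem_cat mem_rev => /orP[yq|yzl2].
  + exists s => //.
    have pS : path (sub_arc arc (U :|: [set y in e])) z (rcons q s).
      apply: path_to_sub pzq_arc _ => t; rewrite inE mem_rcons inE => /or3P[/eqP->|/eqP->|tq].
      * by rewrite !inE ezl2 ?mem_head ?orbT.
      * by rewrite !inE sU.
      * by rewrite !inE eq' ?orbT.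
    have := path_conn_last pS (y := y); rewrite last_rcons; apply.
    by rewrite inE mem_rcons inE yq !orbT.
  + exists k => //.
    have pS : path (sub_arc arc (U :|: [set y in e])) z (rcons l2 k).
      apply: path_to_sub pzk _ => t; rewrite inE mem_rcons inE => /or3P[/eqP->|/eqP->|tl2].
      * by rewrite !inE ezl2 ?mem_head ?orbT.
      * by rewrite !inE kU.
      * by rewrite !inE ezl2 ?orbT // inE tl2 orbT.
    have := path_conn_last pS (y := y); rewrite last_rcons; apply.
    rewrite inE mem_rcons inE; move: yzl2; rewrite inE => /orP[->|->]; by rewrite ?orbT.
Qed.


Lemma supp_single (i : V) s : supp (single i s) = [set i].
Proof. by apply/setP => x; rewrite !inE ffunE; case: (x == i). Qed.

Lemma supp_SI (k n : V) : supp (SI k n) = [set k; n].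
Proof. by apply/setP => x; rewrite !inE ffunE; case: (x == k); case: (x == n). Qed.

Lemma supp_hset X (k : V) (psi : state N) : supp (hset X k psi) = k |: supp psi.
Proof. by apply/setP => x; rewrite !inE ffunE; case: (x == k). Qed.

Lemma supp_addI (n : V) (psi : state N) : supp (addI n psi) = n |: supp psi.
Proof. by apply/setP => x; rewrite !inE ffunE; case: (x == n). Qed.

Lemma no_R_single (i : V) s : s != Rec -> no_R (single i s).
Proof. by move=> sR; apply/forallP => x; rewrite ffunE; case: (x == i) => //=; case: s sR. Qed.

Lemma no_R_hset (k : V) (psi : state N) : no_R psi -> no_R (hset Sus k psi).
Proof. by move=> /forallP H; apply/forallP => x; rewrite ffunE; case: (x == k) => //; apply: H. Qed.

Lemma no_R_addI (n : V) (psi : state N) : no_R psi -> no_R (addI n psi).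
Proof. by move=> /forallP H; apply/forallP => x; rewrite ffunE; case: (x == n) => //; apply: H. Qed.

Lemma no_R_SI (k n : V) : no_R (SI k n).
Proof. by apply/forallP => x; rewrite ffunE; case: (x == k); case: (x == n). Qed.

Lemma ME_noR (psi : state N) : ME arc psi -> no_R psi.
Proof.
elim => [i|i|p p' _ _ [nR [->|[k [n [_ _ _ ->]]]|[k [n [_ _ _ H]]]]]] //;
  try by apply: no_R_single.
- exact: no_R_hset.
- case: (fE_nWk arc n (supp p) k) H => [[->|->|->]|->].
  + exact: no_R_hset.
  + exact: no_R_SI.
  + exact: no_R_single.
  + by apply: no_R_addI; apply: no_R_hset.
Qed.


Lemma good2 (k n : V) : arc n k -> n != k -> good [set k; n].
Proof.
move=> ank nk; split.
- by rewrite cards2 eq_sym nk.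
- move=> x; set c := if x == k then n else k.
  have cS : c \in [set k; n] :\ x.
    rewrite /c !inE; case: (eqVneq x k) => [->|xk]; first by rewrite nk eqxx orbT.
    by rewrite eq_sym xk eqxx.
  apply: (@und_connectedP _ c) => // y yS.
  case: (eqVneq y c) => [->|yc]; first by apply: connect0.
  apply: connect1; rewrite und_arcE yS cS andbT /adj.
  have hy : (y == k) || (y == n) by move: yS; rewrite !inE => /andP[].
  have hc : (c == k) || (c == n) by move: cS; rewrite !inE => /andP[].
  move: yc; case/orP: hy => /eqP ->; case/orP: hc => /eqP ->; rewrite ?eqxx // => _;
  by rewrite ank ?orbT.
- apply/exists_inP; exists k; first by rewrite !inE eqxx.
  apply/forall_inP => u; rewrite !inE => /orP[/eqP->|/eqP->]; first exact: connect0.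
  by apply: connect1; rewrite /sub_arc /= ank !inE !eqxx orbT.
Qed.

Definition Inv (W : {set V}) := #|W| <= 1 \/ exists U, good U /\ W \subset U.

Lemma card1_eq (W : {set V}) k : k \in W -> #|W| <= 1 -> W = [set k].
Proof.
by move=> kW cW; apply/eqP; rewrite eq_sym eqEcard sub1set kW cards1 cW.
Qed.

Lemma ME_inv (psi : state N) : ME arc psi -> Inv (supp psi).
Proof.
elim => [i|i|p p' _ IH [nR [->|[k [n [pk _ _ ->]]]|[k [n [kin nin ank H]]]]]] //;
  try by left; rewrite supp_single cards1.
- have kin : k \in supp p by rewrite inE pk.
  by rewrite supp_hset (setUidPr _) // sub1set.
have nk : n != k by apply/eqP => nke; move: nin; rewrite nke kin.
case: (boolP (fE_nWk arc n (supp p) k)) H => fe.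
  case=> ->.
  - by rewrite supp_hset (setUidPr _) // sub1set.
  - by right; exists [set k; n]; split; [apply: good2 | rewrite supp_SI].
  - by left; rewrite supp_single cards1.
have ek : k |: supp p = supp p by apply/setUidPr; rewrite sub1set.
move=> ->; rewrite supp_addI supp_hset ek.
case: IH => [c1|[U [gU sU]]].
  right; exists [set k; n]; split; first exact: good2.
  by rewrite (card1_eq kin c1); apply/subsetP => y; rewrite !inE => /orP[->|->]; rewrite ?orbT.
move: fe; rewrite /fE_nWk; case: ifP => [/eqP e0 _|ne0].
  right; exists [set k; n]; split; first exact: good2.
  apply/subsetP => y; rewrite !inE => /orP[->//|yp]; rewrite ?orbT //.
  case: (eqVneq y k) => // yk; by move/setP: e0 => /(_ y); rewrite !inE yk yp.
rewrite /fE => /negP/negP; rewrite -setI_eq0 => /set0Pn[u]; rewrite !inE => /andP[/andP[uk ex1] /andP[_ ex2]].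
have [x1 /set1P -> cun] := exists_inP ex1.
have [w wW cuw] := exists_inP ex2.
move: wW; rewrite in_setD1 => /andP[wk wp].
right; case: (boolP (n \in U)) => nU.
  by exists U; split => //; rewrite subUset sub1set nU sU.
have [U' [gU' sUU' nU']] := extend gU (subsetP sU _ kin) (subsetP sU _ wp) wk nU ank uk cun cuw.
by exists U'; split => //; rewrite subUset sub1set nU' (subset_trans sU sUU').
Qed.


Lemma grow_step (psi : state N) k n : ME arc psi -> k \in supp psi -> n \notin supp psi ->
  arc n k -> ~~ fE_nWk arc n (supp psi) k ->
  ME arc (addI n (hset Sus k psi)) /\ supp (addI n (hset Sus k psi)) = n |: supp psi.
Proof.
move=> Mp kin nin ank nf; split.
  apply: (ME_step Mp); split; first exact: ME_noR.
  by apply: Or33; exists k, n; split => //; rewrite (negbTE nf).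
have ek : k |: supp psi = supp psi by apply/setUidPr; rewrite sub1set.
by rewrite supp_addI supp_hset ek.
Qed.

Lemma fE_false (W : {set V}) k n u w : k \in W -> w \in W -> w != k -> u != k ->
  connect (arc_minus arc [set k]) u n -> connect (arc_minus arc [set k]) u w ->
  ~~ fE_nWk arc n W k.
Proof.
move=> kW wW wk uk cun cuw; rewrite /fE_nWk; case: ifP => // _.
rewrite /fE -setI_eq0; apply/set0Pn; exists u; rewrite !inE uk /=.
apply/andP; split; apply/exists_inP; [exists n => //; by rewrite inE | exists w => //].
by rewrite in_setD1 wk.
Qed.

Lemma first_hit (U W : {set V}) r y : r \in W -> W \subset U ->
  connect (sub_arc arc U) y r -> y \in U :\: W ->
  exists2 t, t \in W & exists2 n0, (n0 \in U :\: W) && arc n0 t & connect (sub_arc arc (U :\: W)) y n0.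
Proof.
move=> rW sWU /connectP[p pp er]; rewrite er in rW; clear er; elim: p y pp rW => [|z p IH] y /=.
  by move=> _ rW; rewrite inE rW.
move=> /andP[/and3P[ayz yU zU] pp] rW yX.
case: (boolP (z \in W)) => zW.
  by exists z => //; exists y; [rewrite yX ayz | apply: connect0].
have zX : z \in U :\: W by rewrite inE zW zU.
have [t tW [n0 h cn]] := IH z pp rW zX.
exists t => //; exists n0 => //; apply: connect_trans cn; apply: connect1.
by rewrite /sub_arc /= ayz yX zX.
Qed.


Lemma grow_exists (U W : {set V}) r x0 :
  twoC U -> (forall u, u \in U -> connect (sub_arc arc U) u r) -> r \in W -> W \subset U ->
  x0 \in U :\: W ->
  exists n k, [/\ n \in U :\: W, k \in W, arc n k & ~~ fE_nWk arc n W k].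
Proof.
move=> tU Hr rW sWU x0X.
set X := U :\: W.
have XU y : y \in X -> y \in U by rewrite inE => /andP[].
have XW y : y \in X -> y \notin W by rewrite inE => /andP[].
have toW y : y \in X -> exists2 t, t \in W &
    exists2 n0, (n0 \in X) && arc n0 t & connect (sub_arc arc X) y n0.
  move=> yX; exact: first_hit rW sWU (Hr y (XU y yX)) yX.
pose hit y t := [exists n0, [&& n0 \in X, arc n0 t & connect (sub_arc arc X) y n0]].
have hitP y t : reflect (exists2 n0, (n0 \in X) && arc n0 t & connect (sub_arc arc X) y n0) (hit y t).
  apply: (iffP existsP) => [[n0 /and3P[a b c]]|[n0 /andP[a b] c]]; exists n0 => //; by rewrite ?a ?b ?c.
have notK t c : t \in W -> c \in X -> c \notin [set t].
  by move=> tW' cX; rewrite inE; apply/eqP => e; move: (XW c cX); rewrite e tW'.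
have amX t a b : t \in W -> connect (sub_arc arc X) a b -> connect (arc_minus arc [set t]) a b.
  move=> tW'; apply: connect_sub => c d /and3P[acd cX dX]; apply: connect1.
  by rewrite /arc_minus /= acd !notK.
have [t tW [n0 /andP[n0X an0t] cx0n0]] := toW x0 x0X.
case: (eqVneq (W :\ t) set0) => [e0|ne0].
  by exists n0, t; split => //; rewrite /fE_nWk e0 eqxx.
have [w0 w0W] := set0Pn _ ne0.
pose inP y := (y \in X) && hit y t.
pose inQ y := (y \in X) && [exists t', (t' \in W :\ t) && hit y t'].
case: (boolP [exists y, inP y && inQ y]) => [/existsP[y /andP[/andP[yX /hitP[n1 /andP[n1X an1t] cyn1]] /andP[_ /existsP[t' /andP[t'W /hitP[n2 /andP[n2X an2t'] cyn2]]]]]]|noPQ].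
  exists n1, t; split => //.
  move: t'W; rewrite in_setD1 => /andP[t't t'W'].
  apply: (fE_false (u := y) (w := t') tW t'W' t't).
  - by apply/eqP => yt; move: (XW y yX); rewrite yt tW.
  - exact: amX cyn1.
  - apply: connect_trans (amX _ _ _ tW cyn2) _; apply: connect1.
    by rewrite /arc_minus /= an2t' (notK t n2 tW n2X) inE t't.
case: (boolP [exists s, exists c, [&& s \in W :\ t, inP c & arc s c]]) => [/existsP[s /existsP[c /and3P[sW /andP[cX /hitP[n1 /andP[n1X an1t] ccn1]] asc]]]|noS].
  move: sW; rewrite in_setD1 => /andP[st sW].
  exists n1, t; split => //.
  apply: (fE_false (u := s) (w := s) tW sW st st _ (connect0 _ _)).
  apply: connect_trans (amX _ _ _ tW ccn1); apply: connect1.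
  by rewrite /arc_minus /= asc (notK t c tW cX) inE st.
exfalso.
have Px0 : inP x0 by rewrite /inP x0X; apply/hitP; exists n0; rewrite ?n0X ?an0t.
have cl a b : inP a -> und_arc arc (U :\ t) a b -> inP b.
  move=> /andP[aX /hitP[na /andP[naX anat] cana]]; rewrite und_arcE => /and3P[ab _ bU].
  move: bU; rewrite in_setD1 => /andP[bt bU].
  case: (boolP (b \in W)) => bW.
  - move: ab; rewrite /adj => /orP[aab|aba].
    + case/negP: noPQ; apply/existsP; exists a; rewrite /inP /inQ aX /=; apply/andP; split.
        by apply/hitP; exists na; rewrite ?naX ?anat.
      apply/existsP; exists b; rewrite in_setD1 bt bW /=; apply/hitP; exists a; by rewrite ?aX ?aab // connect0.
    + case/negP: noS; apply/existsP; exists b; apply/existsP; exists a.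
      rewrite in_setD1 bt bW aba /= andbT /inP aX; apply/hitP; exists na => //; by rewrite naX anat.
  - have bX : b \in X by rewrite inE bW bU.
    move: ab; rewrite /adj => /orP[aab|aba].
    + have [t'' t''W [nb /andP[nbX anbt] cbnb]] := toW b bX.
      case: (eqVneq t'' t) => [et|nt].
        rewrite /inP bX; apply/hitP; exists nb => //; by rewrite nbX -et anbt.
      case/negP: noPQ; apply/existsP; exists a; rewrite /inP /inQ aX /=; apply/andP; split.
        by apply/hitP; exists na; rewrite ?naX ?anat.
      apply/existsP; exists t''; rewrite in_setD1 nt t''W /=; apply/hitP; exists nb; first by rewrite nbX anbt.
      apply: connect_trans cbnb; apply: connect1; by rewrite /sub_arc /= aab aX bX.
    + rewrite /inP bX; apply/hitP; exists na; first by rewrite naX anat.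
      apply: connect_trans cana; apply: connect1; by rewrite /sub_arc /= aba aX bX.
have x0t : x0 \in U :\ t.
  by rewrite in_setD1 (XU _ x0X) andbT; apply/eqP => e; move: (XW _ x0X); rewrite e tW.
have w0t : w0 \in U :\ t.
  by move: w0W; rewrite !in_setD1 => /andP[-> /(subsetP sWU)->].
case/connectP: (und_connectedE (tU t) x0t w0t) => p pp ew.
have : inP (last x0 p).
  by elim: p x0 Px0 pp {x0X x0t cx0n0 ew} => [|z p IH] x Px //= /andP[xz pp]; apply: IH (cl _ _ Px xz) pp.
rewrite -ew => /andP[w0X _]; move: (XW _ w0X); move: w0W; rewrite in_setD1 => /andP[_ ->].
done.
Qed.


Lemma reach_all (U : {set V}) r : twoC U -> r \in U ->
  (forall u, u \in U -> connect (sub_arc arc U) u r) ->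
  exists psi, ME arc psi /\ supp psi = U.
Proof.
move=> tU rU Hr.
have main d : forall (W : {set V}) psi, #|U :\: W| <= d -> W \subset U -> r \in W ->
    ME arc psi -> supp psi = W -> exists psi, ME arc psi /\ supp psi = U.
  elim: d => [|d IH] W psi cd sWU rW Mp sp.
    exists psi; split => //; rewrite sp; apply/eqP; rewrite eqEsubset sWU /=.
    by move: cd; rewrite leqn0 cards_eq0 setD_eq0.
  case: (eqVneq (U :\: W) set0) => [e0|ne0].
    exists psi; split => //; rewrite sp; apply/eqP; rewrite eqEsubset sWU /=.
    by rewrite -setD_eq0; apply/eqP.
  have [x0 x0X] := set0Pn _ ne0.
  have [n [k [nX kW ank nf]]] := grow_exists tU Hr rW sWU x0X.
  have kin : k \in supp psi by rewrite sp.
  have nin : n \notin supp psi by rewrite sp; move: nX; rewrite inE => /andP[].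
  rewrite -sp in nf.
  have [Mp' sp'] := grow_step Mp kin nin ank nf.
  apply: (IH (n |: W) _ _ _ _ Mp'); rewrite ?sp' ?sp //.
  - have : #|U :\: (n |: W)| < #|U :\: W|.
      apply: proper_card; rewrite properEneq; apply/andP; split.
        by apply/eqP => e; move/setP: e => /(_ n); rewrite !inE eqxx /= => e; move: nX; rewrite inE -e.
      by apply: setDS; apply: subsetUr.
    by move=> lt; rewrite -ltnS; apply: leq_trans lt cd.
  - by rewrite subUset sub1set sWU (subsetP (subsetDl U W) n nX).
  - by rewrite inE rW orbT.
apply: (main #|U :\: [set r]| [set r] (single r Sus)) => //.
- by rewrite sub1set.
- by rewrite inE.
- exact: ME_S.
- exact: supp_single.
Qed.


Lemma good_dsb (U : {set V}) : good U -> 2 < #|U| -> directed_subblock arc U.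
Proof.
move=> [c1 tU rU] c3; apply/andP; split; first exact: rU.
rewrite /biconnected c3 /=.
apply/andP; split; last by apply/forall_inP => x _; apply: tU.
apply/forallP => y; apply/implyP => yU; apply/forallP => z; apply/implyP => zU.
have : 0 < #|U :\ y :\ z|.
  move: c3; rewrite (cardsD1 y U) yU (cardsD1 z (U :\ y)).
  by case: (z \in U :\ y); case: #|_|.
rewrite card_gt0 => /set0Pn[x]; rewrite !in_setD1 => /and3P[xz xy xU].
apply: (@und_mono (U :\ x)); first exact: subsetDl.
by apply: und_connectedE (tU x) _ _; rewrite in_setD1 ?yU ?zU ?andbT eq_sym.
Qed.

Lemma dsb_good (U : {set V}) : directed_subblock arc U ->
  [/\ twoC U, 2 < #|U| & exists2 r, r \in U & forall u, u \in U -> connect (sub_arc arc U) u r].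
Proof.
move=> /andP[/exists_inP[r rU /forall_inP Hr] /and3P[c3 cU /forall_inP bU]].
split => //; last by exists r.
move=> x; case: (boolP (x \in U)) => xU; first exact: bU.
suff -> : U :\ x = U by [].
by apply/setP => y; rewrite in_setD1; case: (eqVneq y x) => // ->; rewrite (negbTE xU).
Qed.

Lemma dsb_tb (U : {set V}) : directed_subblock arc U ->
  exists2 T, transmission_block arc T & U \subset T.
Proof.
move: {2}#|~: U| (leqnn #|~: U|) => d; elim: d U => [|d IH] U cd dU.
  exists U => //; rewrite /transmission_block dU /=; apply/forallP => T; apply/implyP => pT.
  move: cd; rewrite leqn0 cards_eq0 => /eqP e0.
  have : U = setT by apply/setP => x; move/setP: e0 => /(_ x); rewrite !inE; case: (x \in U).
  by move=> eU; move: pT; rewrite eU properE subsetT andbF.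
case: (boolP [forall T : {set V}, (U \proper T) ==> ~~ directed_subblock arc T]) => h.
  by exists U => //; rewrite /transmission_block dU h.
move: h; rewrite negb_forall => /existsP[T]; rewrite negb_imply negbK => /andP[pT dT].
have [T' tT' sT] : exists2 T', transmission_block arc T' & T \subset T'.
  apply: IH dT; rewrite -ltnS; apply: leq_trans cd; apply: proper_card.
  by rewrite properC.
by exists T' => //; apply: subset_trans sT; apply: proper_sub.
Qed.

End Proof.

Theorem theorem4 (N : nat) (arc : rel 'I_N)
  (Hirr : forall i : 'I_N, ~~ arc i i)
  (Harc : exists i j : 'I_N, arc i j) :
  let m := if [exists W : {set 'I_N}, transmission_block arc W]
           then \max_(W : {set 'I_N} | transmission_block arc W) #|W|
           else 2 in
  (exists psi : state N, ME arc psi /\ #|supp psi| = m) /\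
  (forall psi : state N, ME arc psi -> #|supp psi| <= m).
Proof.
move=> m.
have tb_le T : transmission_block arc T -> #|T| <= m.
  move=> tT; rewrite /m; case: ifP => [_|nB].
    exact: (leq_bigmax_cond (F := fun W : {set 'I_N} => #|W|) T tT).
  by case/negP: (negbT nB); apply/existsP; exists T.
have m2 : 2 <= m.
  case: (boolP [exists W : {set 'I_N}, transmission_block arc W]) => [/existsP[T tT]|nB].
    have [_ c3 _] := dsb_good (proj1 (andP tT)).
    by apply: leq_trans (ltnW c3) (tb_le T tT).
  by rewrite /m (negbTE nB).
split; last first.
  move=> psi Mp; case: (ME_inv Mp) => [c1|[U [gU sU]]]; first by apply: leq_trans c1 (ltnW m2).
  apply: leq_trans (subset_leq_card sU) _.
  case: (leqP #|U| 2) => [c2|c3]; first by apply: leq_trans c2 m2.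
  have [T tT sT] := dsb_tb (good_dsb gU c3).
  by apply: leq_trans (subset_leq_card sT) (tb_le T tT).
rewrite /m; case: ifP => [/existsP[T0 tT0]|nB].
  have : 0 < #|[pred W : {set 'I_N} | transmission_block arc W]|.
    by apply/card_gt0P; exists T0.
  move=> /(eq_bigmax_cond (fun W : {set 'I_N} => #|W|)) [T tT eT].
  have eT' : \max_(W : {set 'I_N} | transmission_block arc W) #|W| = #|T| := eT.
  rewrite eT'.
  have [tU _ [r rU Hr]] := dsb_good (proj1 (andP tT)).
  have [psi [Mp sp]] := reach_all tU rU Hr.
  by exists psi; rewrite sp.
case: Harc => i [j aij].
have ij : i != j by apply/eqP => e; move: (Hirr i); rewrite {2}e aij.
have M0 := ME_S arc j.
have jin : j \in supp (single j Sus) by rewrite supp_single inE.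
have iin : i \notin supp (single j Sus) by rewrite supp_single inE.
have nf : ~~ fE_nWk arc i (supp (single j Sus)) j.
  by rewrite /fE_nWk supp_single setDv eqxx.
have [Mp sp] := grow_step M0 jin iin aij nf.
by exists (addI i (hset Sus j (single j Sus))); rewrite sp supp_single cards2 ij.
Qed.
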